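(* Let $(X,\rho)$ be a complete metric space, $D\subset X$ a closed subset, and $f:D\to\mathbb{R}$ a lower semicontinuous function. Define the set-valued map $L_f:\mathbb{R}\rightrightarrows D$ by $L_f(r)=[f\le r]\cup\partial D$, where $[f\le r]=\{x\in D: f(x)\le r\}$. Then $L_f$ is outer semicontinuous. Moreover, for $\bar r\in f(D)$, $L_f$ is continuous at $\bar r$ if and only if there is no $x\in\operatorname{int}(D)$ such that $f(x)=\bar r$ and $x$ is a local minimizer of $f$.
   Context: For a sequence of sets $C_\nu$ in a metric space, the outer limit $\limsup_\nu C_\nu$ is the set of all cluster points of sequences $x_\nu\in C_\nu$, and the inner limit $\liminf_\nu C_\nu$ is the set of all limits of sequences $x_\nu\in C_\nu$ (for $\nu$ large). For a set-valued map $S$, $\limsup_{x\to\bar x}S(x)$ is the union of $\limsup_\nu S(x_\nu)$ over all sequences $x_\nu\to\bar x$, and $\liminf_{x\to\bar x}S(x)$ is the intersection of $\liminf_\nu S(x_\nu)$ over all sequences $x_\nu\to\bar x$. $S$ is outer semicontinuous at $\bar x$ if $\limsup_{x\to\bar x}S(x)\subset S(\bar x)$, inner semicontinuous at $\bar x$ if $\liminf_{x\to\bar x}S(x)\supset S(\bar x)$, and continuous at $\bar x$ if both hold; outer semicontinuous means outer semicontinuous at every point. $\operatorname{int}(D)$ and $\partial D$ denote interior and boundary of $D$ in $X$. *)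

(* Defs.v *)
From Stdlib Require Export Reals.
Open Scope R_scope.

Section MS.
Variable M : Metric_Space.
Let X := Base M.
Let d := dist M.

Definition ms_seq_conv (u : nat -> X) (l : X) : Prop :=
  forall eps, eps > 0 -> exists N, forall n, (n >= N)%nat -> d (u n) l < eps.

Definition ms_seq_cauchy (u : nat -> X) : Prop :=
  forall eps, eps > 0 -> exists N, forall n m, (n >= N)%nat -> (m >= N)%nat ->
    d (u n) (u m) < eps.

Definition ms_complete_space : Prop :=
  forall u : nat -> X, ms_seq_cauchy u -> exists l, ms_seq_conv u l.

Definition ms_interior (D : X -> Prop) (x : X) : Prop :=
  exists eps, eps > 0 /\ forall y, d x y < eps -> D y.

Definition ms_closure (D : X -> Prop) (x : X) : Prop :=
  forall eps, eps > 0 -> exists y, D y /\ d x y < eps.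

Definition ms_closed_set (D : X -> Prop) : Prop :=
  forall x, ms_closure D x -> D x.

Definition ms_boundary (D : X -> Prop) (x : X) : Prop :=
  ms_closure D x /\ ~ ms_interior D x.

Definition ms_lsc_on (D : X -> Prop) (f : X -> R) : Prop :=
  forall x, D x -> forall eps, eps > 0 -> exists delta, delta > 0 /\
    forall y, D y -> d x y < delta -> f x - eps < f y.

Definition ms_local_min (D : X -> Prop) (f : X -> R) (x : X) : Prop :=
  D x /\ exists eps, eps > 0 /\ forall y, D y -> d x y < eps -> f x <= f y.

Definition outer_lim_seq (C : nat -> X -> Prop) (x : X) : Prop :=
  exists (phi : nat -> nat) (y : nat -> X),
    (forall k, (phi k < phi (S k))%nat) /\
    (forall k, C (phi k) (y k)) /\ ms_seq_conv y x.

Definition inner_lim_seq (C : nat -> X -> Prop) (x : X) : Prop :=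
  exists (N : nat) (y : nat -> X),
    (forall n, (n >= N)%nat -> C n (y n)) /\ ms_seq_conv y x.

Definition outer_lim_map (S : R -> X -> Prop) (rbar : R) (x : X) : Prop :=
  exists r : nat -> R, Un_cv r rbar /\ outer_lim_seq (fun n => S (r n)) x.

Definition inner_lim_map (S : R -> X -> Prop) (rbar : R) (x : X) : Prop :=
  forall r : nat -> R, Un_cv r rbar -> inner_lim_seq (fun n => S (r n)) x.

Definition osc_at (S : R -> X -> Prop) (rbar : R) : Prop :=
  forall x, outer_lim_map S rbar x -> S rbar x.

Definition isc_at (S : R -> X -> Prop) (rbar : R) : Prop :=
  forall x, S rbar x -> inner_lim_map S rbar x.

Definition cont_at (S : R -> X -> Prop) (rbar : R) : Prop :=
  osc_at S rbar /\ isc_at S rbar.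

Definition osc (S : R -> X -> Prop) : Prop := forall rbar, osc_at S rbar.

Definition Lf (D : X -> Prop) (f : X -> R) (r : R) (x : X) : Prop :=
  (D x /\ f x <= r) \/ ms_boundary D x.

End MS.

(* Main.v *)
Require Import Defs.
From Stdlib Require Import Reals.
From Stdlib Require Import Lra Lia Classical ClassicalEpsilon.
Open Scope R_scope.

Lemma dxx (M : Metric_Space) (x : Base M) : dist M x x = 0.
Proof. apply dist_refl; reflexivity. Qed.

Lemma phi_ge (phi : nat -> nat) : (forall k, (phi k < phi (S k))%nat) ->
  forall k, (k <= phi k)%nat.
Proof. intros H k; induction k; [lia|]. specialize (H k); lia. Qed.

Lemma boundary_closed (M : Metric_Space) (D : Base M -> Prop) (x : Base M) :
  ms_closure M (ms_boundary M D) x -> ms_boundary M D x.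
Proof.
  intros Hc; split.
  - intros eps Heps.
    destruct (Hc (eps/2)) as [b [[Hb1 _] Hb2]]; [lra|].
    destruct (Hb1 (eps/2)) as [y [Hy1 Hy2]]; [lra|].
    exists y; split; auto.
    pose proof (dist_tri M x y b); lra.
  - intros [e [He Hi]].
    destruct (Hc (e/2)) as [b [[_ Hb1] Hb2]]; [lra|].
    apply Hb1. exists (e/2); split; [lra|].
    intros y Hy. apply Hi. pose proof (dist_tri M x y b); lra.
Qed.

Lemma part1 (M : Metric_Space) (D : Base M -> Prop) (f : Base M -> R) :
  ms_closed_set M D -> ms_lsc_on M D f -> osc M (Lf M D f).
Proof.
  intros HD Hf rbar x [r [Hr [phi [y [Hphi [Hy Hconv]]]]]].
  destruct (classic (ms_closure M (ms_boundary M D) x)) as [Hb|Hb].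
  { right; apply boundary_closed; auto. }
  assert (Heps0 : exists eps0, eps0 > 0 /\ forall b, ms_boundary M D b -> dist M x b >= eps0).
  { apply NNPP; intro Hn; apply Hb; intros eps Heps.
    apply NNPP; intro Hn2; apply Hn; exists eps; split; auto.
    intros b Hbb. apply Rnot_lt_ge; intro Hlt; apply Hn2; exists b; auto. }
  destruct Heps0 as [eps0 [He0 Hbd]].
  destruct (Hconv eps0 He0) as [K HK].
  assert (HDy : forall k, (k >= K)%nat -> D (y k) /\ f (y k) <= r (phi k)).
  { intros k Hk. destruct (Hy k) as [H|H]; auto.
    exfalso. specialize (Hbd _ H). specialize (HK k Hk). rewrite dist_sym in HK. lra. }
  assert (HxD : D x).
  { apply HD; intros eps Heps. destruct (Hconv eps Heps) as [K2 HK2].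
    exists (y (max K K2)); split.
    - apply HDy; lia.
    - rewrite dist_sym; apply HK2; lia. }
  left; split; auto.
  apply Rnot_lt_le; intro Hlt.
  set (e := (f x - rbar)/2).
  assert (He : e > 0) by (unfold e; lra).
  destruct (Hf x HxD e He) as [delta [Hdel Hf2]].
  destruct (Hconv delta Hdel) as [K2 HK2].
  destruct (Hr e He) as [N HN].
  set (k := max K (max K2 N)).
  pose proof (phi_ge phi Hphi k) as Hpk.
  assert (H1 := HN (phi k) ltac:(unfold k in *; lia)).
  unfold R_dist in H1. apply Rabs_def2 in H1.
  destruct (HDy k ltac:(unfold k; lia)) as [Hyk Hfk].
  assert (H2 := Hf2 (y k) Hyk ltac:(rewrite dist_sym; apply HK2; unfold k; lia)).
  unfold e in *; lra.
Qed.

Lemma inner_lemma (M : Metric_Space) (Sm : R -> Base M -> Prop) (r : nat -> R) (x : Base M) :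
  (forall k, exists N, forall n, (n >= N)%nat -> exists y, Sm (r n) y /\ dist M x y < / (INR k + 1)) ->
  inner_lim_seq M (fun n => Sm (r n)) x.
Proof.
  intros H.
  set (Q := fun n k => exists z, Sm (r n) z /\ dist M x z < / (INR k + 1)).
  assert (E : forall n, exists y, forall k, (k <= n)%nat -> Q n k -> Sm (r n) y /\ dist M x y < / (INR k + 1)).
  { intro n.
    assert (G : forall m, exists y, forall k, (k <= m)%nat -> Q n k -> Sm (r n) y /\ dist M x y < / (INR k + 1)).
    { induction m.
      - destruct (classic (Q n 0%nat)) as [[z Hz]|Hn].
        + exists z; intros k Hk _. replace k with 0%nat by lia. auto.
        + exists x; intros k Hk Hq. replace k with 0%nat in Hq by lia. contradiction.
      - destruct (classic (Q n (S m))) as [[z [Hz1 Hz2]]|Hn].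
        + exists z; intros k Hk _. split; auto.
          eapply Rlt_le_trans; [exact Hz2|].
          apply Rinv_le_contravar.
          * pose proof (pos_INR k); lra.
          * apply Rplus_le_compat_r, le_INR; lia.
        + destruct IHm as [y Hy]. exists y; intros k Hk Hq.
          destruct (Nat.eq_dec k (S m)) as [->|Hne]; [contradiction|].
          apply Hy; auto; lia. }
    apply G. }
  set (y := fun n => proj1_sig (constructive_indefinite_description _ (E n))).
  assert (Hy : forall n k, (k <= n)%nat -> Q n k -> Sm (r n) (y n) /\ dist M x (y n) < / (INR k + 1)).
  { intros n. unfold y. destruct (constructive_indefinite_description _ (E n)); simpl; auto. }
  destruct (H 0%nat) as [N0 HN0].
  exists N0, y; split.
  - intros n Hn. apply (Hy n 0%nat); [lia|]. apply HN0; auto.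
  - intros eps Heps.
    destruct (archimed_cor1 eps Heps) as [k [Hk1 Hk2]].
    destruct (H k) as [Nk HNk].
    exists (max Nk k); intros n Hn.
    destruct (Hy n k ltac:(lia) (HNk n ltac:(lia))) as [_ Hd].
    rewrite dist_sym.
    eapply Rlt_trans; [exact Hd|].
    eapply Rle_lt_trans; [|exact Hk1].
    apply Rinv_le_contravar; [apply lt_0_INR; lia| lra].
Qed.

Theorem mainTheorem1 (M : Metric_Space) (D : Base M -> Prop) (f : Base M -> R) :
  ms_complete_space M -> ms_closed_set M D -> ms_lsc_on M D f ->
  osc M (Lf M D f) /\
  (forall rbar : R, (exists x, D x /\ f x = rbar) ->
     (cont_at M (Lf M D f) rbar <->
      ~ (exists x, ms_interior M D x /\ f x = rbar /\ ms_local_min M D f x))).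
Proof.
  intros _ HD Hf.
  split; [apply part1; auto|].
  intros rbar _; split.
  - intros [_ Hisc] [x [[e1 [He1 Hint]] [Hfx [HxD [e2 [He2 Hmin]]]]]].
    assert (HL : Lf M D f rbar x) by (left; split; [auto|lra]).
    set (r := fun n : nat => rbar - / (INR n + 1)).
    assert (Hr : Un_cv r rbar).
    { intros eps Heps. destruct (archimed_cor1 eps Heps) as [N [HN1 HN2]].
      exists N; intros n Hn. unfold R_dist, r.
      replace (rbar - / (INR n + 1) - rbar) with (- / (INR n + 1)) by ring.
      rewrite Rabs_Ropp, Rabs_right.
      + eapply Rle_lt_trans; [|exact HN1].
        apply Rinv_le_contravar; [apply lt_0_INR; lia|].
        apply le_INR in Hn; lra.
      + apply Rle_ge, Rlt_le, Rinv_0_lt_compat. pose proof (pos_INR n); lra. }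
    destruct (Hisc x HL r Hr) as [N [y [Hy Hc]]].
    destruct (Hc (Rmin e1 e2)) as [K HK]; [apply Rmin_glb_lt; auto|].
    set (n := max N K).
    assert (Hd := HK n ltac:(unfold n; lia)). rewrite dist_sym in Hd.
    assert (Hd1 : dist M x (y n) < e1) by (eapply Rlt_le_trans; [exact Hd| apply Rmin_l]).
    assert (Hd2 : dist M x (y n) < e2) by (eapply Rlt_le_trans; [exact Hd| apply Rmin_r]).
    destruct (Hy n ltac:(unfold n; lia)) as [[HyD Hfy]|[_ Hnint]].
    + assert (Hm := Hmin (y n) HyD Hd2).
      unfold r in Hfy.
      assert (0 < / (INR n + 1)) by (apply Rinv_0_lt_compat; pose proof (pos_INR n); lra).
      lra.
    + apply Hnint. exists (e1 - dist M x (y n)); split; [lra|].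
      intros z Hz. apply Hint. pose proof (dist_tri M x z (y n)); lra.
  - intros Hno. split; [apply part1; auto|].
    intros x Hx r Hr. apply inner_lemma. intros k.
    set (eps := / (INR k + 1)).
    assert (Heps : eps > 0) by (unfold eps; apply Rinv_0_lt_compat; pose proof (pos_INR k); lra).
    assert (Hz : ms_boundary M D x \/ exists z, D z /\ f z < rbar /\ dist M x z < eps).
    { destruct Hx as [[HxD Hfx]|Hb]; [|left; auto].
      destruct (classic (ms_interior M D x)) as [Hi|Hni].
      - right. destruct (Rle_lt_or_eq_dec _ _ Hfx) as [Hlt|Heq].
        + exists x; split; [auto|split; [auto|rewrite dxx; auto]].
        + apply NNPP; intro Hn. apply Hno. exists x; split; [auto|split; [auto|]].
          split; auto. exists eps; split; auto.
          intros z Hz Hdz. apply Rnot_lt_le; intro Hlt. apply Hn. exists z; split; auto; lra.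
      - left; split; auto. intros e He; exists x; split; auto; rewrite dxx; lra. }
    destruct Hz as [Hb|[z [HzD [Hfz Hdz]]]].
    + exists 0%nat; intros n _; exists x; split; [right; auto|]. rewrite dxx; auto.
    + destruct (Hr (rbar - f z)) as [N HN]; [lra|].
      exists N; intros n Hn; exists z; split; auto.
      left; split; auto.
      specialize (HN n Hn). unfold R_dist in HN. apply Rabs_def2 in HN. lra.
Qed.
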